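(* Let $T$ be an extension of $\mathsf{Q}$ which represents a function $g$. Then $T$ represents every (partial) function $f$ that can be computed by an algorithm with oracle access to $g$.
   Context: $\mathsf{Q}$ is the first-order theory with equality in the language $\{0,S,+,\times\}$ axiomatized by: $\forall x\colon \neg\, Sx = 0$; $\forall x,y\colon Sx = Sy \rightarrow x = y$; $\forall x\colon x = 0 \lor \exists y\colon Sy = x$; $\forall x\colon x + 0 = x$; $\forall x,y\colon x + Sy = S(x+y)$; $\forall x\colon x \times 0 = 0$; $\forall x,y\colon x \times Sy = x + (x\times y)$. A theory is a set of sentences closed under logical consequence; an extension of $\mathsf{Q}$ is a theory containing it (possibly in an expanded language). Numerals: $\overline{n} = S\cdots S0$ ($n$ times $S$). A partial function $f\colon\mathbb{N}^k\to\mathbb{N}$ is represented in $T$ if there is a formula $\langle f\rangle(x_1,\dots,x_k,y)$ such that whenever $f(\mathbf{x}) = y$, $T \vdash \exists! y'\colon \langle f\rangle(\overline{\mathbf{x}}, y') \land \langle f\rangle(\overline{\mathbf{x}}, \overline{y})$, where $\exists! y\colon P(y) :\equiv \exists y\colon P(y) \land \forall z\colon P(z) \rightarrow z = y$. *)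

(* Defs.v *)
From Stdlib Require Import Arith Fin.

Set Implicit Arguments.

(* Syntax: the language {0,S,+,x} expanded by function symbols F n and
   relation symbols P n of arity n.  Variables are de Bruijn indices.   *)
Section Syntax.
Variables (F P : nat -> Type).

Inductive term : Type :=
| var (n : nat)
| tzero
| tsucc (t : term)
| tplus (t1 t2 : term)
| ttimes (t1 t2 : term)
| func (n : nat) (f : F n) (args : Fin.t n -> term).

Inductive form : Type :=
| Fal
| Eq (t1 t2 : term)
| Rel (n : nat) (p : P n) (args : Fin.t n -> term)
| Neg (A : form)
| And (A B : form)
| Or (A B : form)
| Imp (A B : form)
| All (A : form)
| Ex (A : form).

Fixpoint tbound (b : nat) (t : term) : Prop :=
  match t with
  | var n => n < b
  | tzero => True
  | tsucc t => tbound b t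
  | tplus t1 t2 => tbound b t1 /\ tbound b t2
  | ttimes t1 t2 => tbound b t1 /\ tbound b t2
  | func f a => forall i, tbound b (a i)
  end.

Fixpoint fbound (b : nat) (A : form) : Prop :=
  match A with
  | Fal => True
  | Eq t1 t2 => tbound b t1 /\ tbound b t2
  | Rel p a => forall i, tbound b (a i)
  | Neg A => fbound b A
  | And A B | Or A B | Imp A B => fbound b A /\ fbound b B
  | All A | Ex A => fbound (S b) A
  end.

Definition sentence (A : form) : Prop := fbound 0 A.

Fixpoint tsubst (s : nat -> term) (t : term) : term :=
  match t with
  | var n => s n
  | tzero => tzero
  | tsucc t => tsucc (tsubst s t)
  | tplus t1 t2 => tplus (tsubst s t1) (tsubst s t2)
  | ttimes t1 t2 => ttimes (tsubst s t1) (tsubst s t2)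
  | func f a => func f (fun i => tsubst s (a i))
  end.

Definition up (s : nat -> term) : nat -> term :=
  fun n => match n with
           | 0 => var 0
           | S m => tsubst (fun j => var (S j)) (s m)
           end.

Fixpoint fsubst (s : nat -> term) (A : form) : form :=
  match A with
  | Fal => Fal
  | Eq t1 t2 => Eq (tsubst s t1) (tsubst s t2)
  | Rel p a => Rel p (fun i => tsubst s (a i))
  | Neg A => Neg (fsubst s A)
  | And A B => And (fsubst s A) (fsubst s B)
  | Or A B => Or (fsubst s A) (fsubst s B)
  | Imp A B => Imp (fsubst s A) (fsubst s B)
  | All A => All (fsubst (up s) A)
  | Ex A => Ex (fsubst (up s) A)
  end.

Fixpoint num (n : nat) : term :=
  match n with 0 => tzero | S m => tsucc (num m) end.

(* Exists! y. A(y)  :=  Exists y. A(y) /\ forall z. A(z) -> z = y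
   (A has the quantified variable as de Bruijn index 0) *)
Definition ExU (A : form) : form :=
  Ex (And A (All (Imp (fsubst (fun n => match n with
                                         | 0 => var 0
                                         | S j => var (S (S j)) end) A)
                      (Eq (var 0) (var 1))))).

Record structure : Type := {
  dom : Type;
  i_zero : dom;
  i_succ : dom -> dom;
  i_plus : dom -> dom -> dom;
  i_times : dom -> dom -> dom;
  i_func : forall n, F n -> (Fin.t n -> dom) -> dom;
  i_rel : forall n, P n -> (Fin.t n -> dom) -> Prop }.

Definition scons {D : Type} (d : D) (rho : nat -> D) : nat -> D :=
  fun n => match n with 0 => d | S m => rho m end.

Fixpoint teval (M : structure) (rho : nat -> dom M) (t : term) : dom M :=
  match t with
  | var n => rho n
  | tzero => i_zero M
  | tsucc t => i_succ M (teval M rho t)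
  | tplus t1 t2 => i_plus M (teval M rho t1) (teval M rho t2)
  | ttimes t1 t2 => i_times M (teval M rho t1) (teval M rho t2)
  | func f a => i_func M f (fun i => teval M rho (a i))
  end.

Fixpoint sat (M : structure) (rho : nat -> dom M) (A : form) : Prop :=
  match A with
  | Fal => False
  | Eq t1 t2 => teval M rho t1 = teval M rho t2
  | Rel p a => i_rel M p (fun i => teval M rho (a i))
  | Neg A => ~ sat M rho A
  | And A B => sat M rho A /\ sat M rho B
  | Or A B => sat M rho A \/ sat M rho B
  | Imp A B => sat M rho A -> sat M rho B
  | All A => forall d : dom M, sat M (scons d rho) A
  | Ex A => exists d : dom M, sat M (scons d rho) A
  end.

Definition entails (T : form -> Prop) (A : form) : Prop :=
  forall M : structure,
    (forall B rho, T B -> sat M rho B) -> forall rho, sat M rho A.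

Definition is_theory (T : form -> Prop) : Prop :=
  (forall A, T A -> sentence A) /\
  (forall A, sentence A -> entails T A -> T A).

Definition Qax (A : form) : Prop :=
  A = All (Neg (Eq (tsucc (var 0)) tzero)) \/
  A = All (All (Imp (Eq (tsucc (var 1)) (tsucc (var 0))) (Eq (var 1) (var 0)))) \/
  A = All (Or (Eq (var 0) tzero) (Ex (Eq (tsucc (var 0)) (var 1)))) \/
  A = All (Eq (tplus (var 0) tzero) (var 0)) \/
  A = All (All (Eq (tplus (var 1) (tsucc (var 0))) (tsucc (tplus (var 1) (var 0))))) \/
  A = All (Eq (ttimes (var 0) tzero) tzero) \/
  A = All (All (Eq (ttimes (var 1) (tsucc (var 0)))
                   (tplus (var 1) (ttimes (var 1) (var 0))))).

Definition extension_of_Q (T : form -> Prop) : Prop :=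
  is_theory T /\ (forall A, Qax A -> T A).

(* Representability.  A partial function N^k -> N is a functional
   relation on (Fin.t k -> nat) * nat.  In the representing formula,
   de Bruijn variable 0 is y and variable (S i) is x_(i+1) (i < k). *)
Definition vnth {k : nat} (x : Fin.t k -> nat) (j : nat) : nat :=
  match Fin.of_nat j k with
  | inleft i => x i
  | inright _ => 0
  end.

Definition inst {k : nat} (x : Fin.t k -> nat) (s : term) : nat -> term :=
  fun n => match n with 0 => s | S j => num (vnth x j) end.

Definition rep_sentence {k : nat} (A : form) (x : Fin.t k -> nat) (y : nat)
  : form :=
  And (ExU (fsubst (inst x (var 0)) A)) (fsubst (inst x (num y)) A).

(* T is closed under consequence, so T |- B is B \in T *)
Definition represents (T : form -> Prop) {k : nat}
  (f : (Fin.t k -> nat) -> nat -> Prop) : Prop :=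
  exists A : form, fbound (S k) A /\
    forall x y, f x y -> T (rep_sentence A x y).

End Syntax.


Definition partial_function {k : nat} (f : (Fin.t k -> nat) -> nat -> Prop)
  : Prop := forall x y1 y2, f x y1 -> f x y2 -> y1 = y2.

Definition vcons {k : nat} (a : nat) (x : Fin.t k -> nat) : Fin.t (S k) -> nat :=
  fun i => Fin.caseS' i (fun _ => nat) a x.

Definition vtail {k : nat} (v : Fin.t (S k) -> nat) : Fin.t k -> nat :=
  fun i => v (Fin.FS i).

Inductive prog (m : nat) : nat -> Type :=
| pZero (k : nat) : prog m k
| pSucc : prog m 1
| pProj (k : nat) (i : Fin.t k) : prog m k
| pOracle : prog m m
| pComp (k j : nat) (h : prog m j) (gs : Fin.t j -> prog m k) : prog m k
| pRec (k : nat) (b : prog m k) (s : prog m (S (S k))) : prog m (S k)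
| pMu (k : nat) (h : prog m (S k)) : prog m k.

Inductive eval (m : nat) (g : (Fin.t m -> nat) -> nat -> Prop)
  : forall k, prog m k -> (Fin.t k -> nat) -> nat -> Prop :=
| ev_zero (k : nat) (x : Fin.t k -> nat) : eval g (pZero m k) x 0
| ev_succ (x : Fin.t 1 -> nat) : eval g (pSucc m) x (S (x Fin.F1))
| ev_proj (k : nat) (i : Fin.t k) (x : Fin.t k -> nat) :
    eval g (pProj m i) x (x i)
| ev_oracle (x : Fin.t m -> nat) (y : nat) : g x y -> eval g (pOracle m) x y
| ev_comp (k j : nat) (h : prog m j) (gs : Fin.t j -> prog m k)
    (x : Fin.t k -> nat) (ys : Fin.t j -> nat) (z : nat) :
    (forall i, eval g (gs i) x (ys i)) -> eval g h ys z ->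
    eval g (@pComp m k j h gs) x z
| ev_rec0 (k : nat) (b : prog m k) (s : prog m (S (S k)))
    (v : Fin.t (S k) -> nat) (y : nat) :
    v Fin.F1 = 0 -> eval g b (vtail v) y ->
    eval g (@pRec m k b s) v y
| ev_recS (k : nat) (b : prog m k) (s : prog m (S (S k)))
    (v : Fin.t (S k) -> nat) (n z y : nat) :
    v Fin.F1 = S n ->
    eval g (@pRec m k b s) (vcons n (vtail v)) z ->
    eval g s (vcons n (vcons z (vtail v))) y ->
    eval g (@pRec m k b s) v y
| ev_mu (k : nat) (h : prog m (S k)) (x : Fin.t k -> nat) (y : nat) :
    eval g h (vcons y x) 0 ->
    (forall i, i < y -> exists z, eval g h (vcons i x) (S z)) ->
    eval g (@pMu m k h) x y.

Definition oracle_computable {m k : nat} (g : (Fin.t m -> nat) -> nat -> Prop)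
  (f : (Fin.t k -> nat) -> nat -> Prop) : Prop :=
  exists p : prog m k, forall x y, f x y <-> eval g p x y.

(* Main.v *)
Require Import Defs.
From Stdlib Require Import Arith Lia List FunctionalExtensionality Setoid.

Fixpoint prodm (m : nat -> nat) (n : nat) : nat :=
  match n with 0 => m 0 | S n' => prodm m n' * m (S n') end.

Lemma prodm_pos m n : (forall i, 0 < m i) -> 0 < prodm m n.
Proof. intros H; induction n; simpl; [apply H|]. specialize (H (S n)); nia. Qed.

Lemma prodm_div m n i : i <= n -> Nat.divide (m i) (prodm m n).
Proof.
  induction n; intros Hi; simpl.
  - assert (i = 0) by lia; subst; apply Nat.divide_refl.
  - destruct (Nat.eq_dec i (S n)) as [->|Hne].
    + apply Nat.divide_factor_r.
    + apply Nat.divide_mul_l. apply IHn. lia.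
Qed.

Lemma gcd_mul_1 a b c : Nat.gcd a c = 1 -> Nat.gcd b c = 1 -> Nat.gcd (a * b) c = 1.
Proof.
  intros Ha Hb.
  set (g := Nat.gcd (a*b) c).
  assert (Hg1 : Nat.divide g (a*b)) by apply Nat.gcd_divide_l.
  assert (Hg2 : Nat.divide g c) by apply Nat.gcd_divide_r.
  assert (Hga : Nat.gcd g a = 1).
  { apply Nat.divide_1_r. rewrite <- Ha. apply Nat.gcd_greatest.
    apply Nat.gcd_divide_r. eapply Nat.divide_trans; [apply Nat.gcd_divide_l|exact Hg2]. }
  assert (Nat.divide g b) by (eapply Nat.gauss; eauto).
  apply Nat.divide_1_r. rewrite <- Hb. apply Nat.gcd_greatest; auto.
Qed.

Lemma prodm_coprime m n : (forall i j, i < j <= S n -> Nat.gcd (m i) (m j) = 1) ->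
  Nat.gcd (prodm m n) (m (S n)) = 1.
Proof.
  intros H. assert (G : forall n', n' <= n -> Nat.gcd (prodm m n') (m (S n)) = 1).
  { induction n'; intros Hn; simpl. apply H; lia.
    apply gcd_mul_1. apply IHn'; lia. apply H; lia. }
  apply G; lia.
Qed.

Lemma crt_seq (m val : nat -> nat) nn :
  (forall i, 0 < m i) -> (forall i j, i < j <= nn -> Nat.gcd (m i) (m j) = 1) ->
  exists c, forall i, i <= nn -> c mod m i = val i mod m i.
Proof.
  intros Hpos Hcop0.
  assert (G: forall n, n <= nn -> exists c, forall i, i <= n -> c mod m i = val i mod m i); [|apply G; lia].
  induction n; intros Hnn.
  - exists (val 0). intros i Hi; assert (i = 0) by lia; subst; reflexivity.
  - destruct IHn as [c Hc]; [lia|].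
    assert (Hcop : forall i j, i < j <= S n -> Nat.gcd (m i) (m j) = 1) by (intros; apply Hcop0; lia).
    pose proof (prodm_coprime m n Hcop) as Hcp.
    set (P := prodm m n) in *. set (m' := m (S n)) in *.
    assert (HP : 0 < P) by (apply prodm_pos; auto).
    destruct (Nat.gcd_bezout_pos P m' HP) as [u [w Huw]].
    rewrite Hcp in Huw.
    set (t := (m' - c mod m') + val (S n)).
    exists (c + (u * P) * t). intros i Hi.
    destruct (Nat.eq_dec i (S n)) as [->|Hne].
    + fold m'. rewrite Huw.
      assert (Hm' : 0 < m') by apply Hpos.
      assert (E : c + (1 + w * m') * t = val (S n) + (c / m' + 1 + w * t) * m').
      { unfold t. pose proof (Nat.div_mod_eq c m'). pose proof (Nat.mod_upper_bound c m' ltac:(lia)). nia. }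
      rewrite E, Nat.Div0.mod_add. reflexivity.
    + destruct (prodm_div m n i ltac:(lia)) as [q Hq]. fold P in Hq.
      rewrite Hq. replace (u * (q * m i) * t) with ((u * q * t) * m i) by ring.
      rewrite Nat.Div0.mod_add. apply Hc; lia.
Qed.

Fixpoint fact' n := match n with 0 => 1 | S n' => S n' * fact' n' end.
Lemma fact'_div a N : 0 < a <= N -> Nat.divide a (fact' N).
Proof.
  induction N; intros H; [lia|]. change (fact' (S N)) with (S N * fact' N).
  destruct (Nat.eq_dec a (S N)) as [->|Hne].
  - apply Nat.divide_factor_l.
  - apply Nat.divide_mul_r. apply IHN; lia.
Qed.

Lemma beta_coprime d n i j : (forall a, 0 < a <= n -> Nat.divide a d) ->
  i < j <= n -> Nat.gcd (S (d * S i)) (S (d * S j)) = 1.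
Proof.
  intros Hd Hij. set (g := Nat.gcd _ _).
  assert (H1 : Nat.divide g (S (d * S i))) by apply Nat.gcd_divide_l.
  assert (H2 : Nat.divide g (S (d * S j))) by apply Nat.gcd_divide_r.
  assert (H3 : Nat.divide g (S j * S (d * S i) - S i * S (d * S j))).
  { apply Nat.divide_sub_r; apply Nat.divide_mul_r; assumption. }
  replace (S j * S (d * S i) - S i * S (d * S j)) with (j - i) in H3 by nia.
  assert (H4 : Nat.divide g d).
  { eapply Nat.divide_trans; [exact H3|]. apply Hd. lia. }
  assert (H5 : Nat.divide g (d * S i)) by (apply Nat.divide_mul_l; auto).
  assert (H6 : Nat.divide g (S (d * S i) - d * S i)) by (apply Nat.divide_sub_r; auto).
  replace (S (d * S i) - d * S i) with 1 in H6 by lia.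
  apply Nat.divide_1_r; auto.
Qed.

Lemma beta_lemma (n : nat) (val : nat -> nat) :
  exists c d, forall i, i <= n -> c mod S (d * S i) = val i.
Proof.
  set (N := n + fold_right max 0 (map val (seq 0 (S n)))).
  set (d := fact' (S N)).
  assert (Hd : forall a, 0 < a <= n -> Nat.divide a d) by (intros; apply fact'_div; unfold N; lia).
  assert (HdN : S N <= d).
  { unfold d. clear. induction N; simpl in *; lia. }
  assert (Hval : forall i, i <= n -> val i <= N).
  { intros i Hi. unfold N.
    assert (In (val i) (map val (seq 0 (S n)))) by (apply in_map; apply in_seq; lia).
    clear -H. induction (map val (seq 0 (S n))); simpl in *; [tauto|].
    destruct H as [->|H]; [lia|]. specialize (IHl H); lia. }
  destruct (crt_seq (fun i => S (d * S i)) val n) as [c Hc].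
  - intros; lia.
  - intros i j Hij. apply (beta_coprime d n); auto.
  - exists c, d. intros i Hi. rewrite Hc by auto. apply Nat.mod_small.
    specialize (Hval i Hi). nia.
Qed.

Notation V n := (var _ n).
Notation Z0 := (tzero _).
Notation EQ := (Eq _).

Lemma teval_tsubst {F P} (M : structure F P) rho s (t : term F) :
  teval M rho (tsubst s t) = teval M (fun n => teval M rho (s n)) t.
Proof.
  induction t; simpl; try congruence.
  f_equal. apply functional_extensionality; intros i. auto.
Qed.

Lemma up_env {F P} (M : structure F P) rho s d :
  (fun n => teval M (scons d rho) (up s n)) = scons d (fun n => teval M rho (s n)).
Proof.
  apply functional_extensionality; intros [|n]; simpl; [reflexivity|].
  rewrite teval_tsubst. reflexivity.
Qed.

Lemma sat_fsubst {F P} (M : structure F P) (A : form F P) : forall rho s,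
  sat M rho (fsubst s A) <-> sat M (fun n => teval M rho (s n)) A.
Proof.
  induction A; intros rho s; simpl.
  - tauto.
  - rewrite !teval_tsubst. tauto.
  - assert (E : (fun i => teval M rho (tsubst s (args i))) = (fun i => teval M (fun n => teval M rho (s n)) (args i)))
      by (apply functional_extensionality; intros; apply teval_tsubst).
    rewrite E. tauto.
  - rewrite IHA. tauto.
  - rewrite IHA1, IHA2. tauto.
  - rewrite IHA1, IHA2. tauto.
  - rewrite IHA1, IHA2. tauto.
  - split; intros H d; specialize (H d); [rewrite IHA, up_env in H|rewrite IHA, up_env]; exact H.
  - split; intros [d H]; exists d; [rewrite IHA, up_env in H|rewrite IHA, up_env]; exact H.
Qed.

Lemma tbound_mono {F} (t : term F) : forall b b', b <= b' -> tbound b t -> tbound b' t.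
Proof.
  induction t as [| | |t1 IH1 t2 IH2|t1 IH1 t2 IH2|n f args IH]; simpl; intros b b' Hb Ht; try tauto; try lia.
  - eauto.
  - destruct Ht; split; eauto.
  - destruct Ht; split; eauto.
  - intros i. eauto.
Qed.

Lemma tsubst_bound {F} (t : term F) : forall b b' s, tbound b t -> (forall n, n < b -> tbound b' (s n)) ->
  tbound b' (tsubst s t).
Proof.
  induction t as [| | |t1 IH1 t2 IH2|t1 IH1 t2 IH2|n f args IH]; simpl; intros b b' s Ht Hs; try tauto; eauto.
  - destruct Ht; split; eauto.
  - destruct Ht; split; eauto.
Qed.

Lemma fsubst_bound {F P} (A : form F P) : forall b b' s, fbound b A -> (forall n, n < b -> tbound b' (s n)) ->
  fbound b' (fsubst s A).
Proof.
  assert (UP : forall b b' (s : nat -> term F), (forall n, n < b -> tbound b' (s n)) ->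
     forall n, n < S b -> tbound (S b') (up s n)).
  { intros b b' s Hs [|n] Hn; simpl; [lia|].
    eapply tsubst_bound; [apply Hs; lia|]. simpl; intros; lia. }
  induction A; simpl; intros b b' s H Hs; try tauto.
  - destruct H; split; eapply tsubst_bound; eauto.
  - intros i; eapply tsubst_bound; eauto.
  - eauto.
  - destruct H; split; eauto.
  - destruct H; split; eauto.
  - destruct H; split; eauto.
  - eapply IHA; eauto.
  - eapply IHA; eauto.
Qed.

Lemma tbound_num {F} b n : tbound b (num F n).
Proof. induction n; simpl; auto. Qed.

Fixpoint nm {F P} (M : structure F P) (n : nat) : dom M :=
  match n with 0 => i_zero M | S n' => i_succ M (nm M n') end.

Lemma teval_num {F P} (M : structure F P) rho n : teval M rho (num F n) = nm M n.
Proof. induction n; simpl; congruence. Qed.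

Definition xenv {F P} (M : structure F P) {k} (x : Fin.t k -> nat) : nat -> dom M :=
  fun j => nm M (vnth x j).

Lemma sat_inst {F P} (M : structure F P) {k} (x : Fin.t k -> nat) t A rho :
  sat M rho (fsubst (inst x t) A) <-> sat M (scons (teval M rho t) (xenv M x)) A.
Proof.
  rewrite sat_fsubst.
  assert (E : (fun n => teval M rho (inst x t n)) = scons (teval M rho t) (xenv M x)).
  { apply functional_extensionality; intros [|n]; simpl; [reflexivity|].
    apply teval_num. }
  rewrite E; tauto.
Qed.

Definition RepSem {F P} (M : structure F P) (A : form F P) {k} (x : Fin.t k -> nat) (y : nat) : Prop :=
  forall d, sat M (scons d (xenv M x)) A <-> d = nm M y.

Lemma sat_ExU {F P} (M : structure F P) A rho :
  sat M rho (ExU A) <-> exists d, sat M (scons d rho) A /\ forall e, sat M (scons e rho) A -> e = d.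
Proof.
  unfold ExU; simpl.
  assert (E : forall e d, sat M (scons e (scons d rho)) (fsubst (fun n => match n with 0 => var F 0 | S j => var F (S (S j)) end) A)
     <-> sat M (scons e rho) A).
  { intros e d. rewrite sat_fsubst.
    assert (E : (fun n => teval M (scons e (scons d rho)) (match n with 0 => var F 0 | S j => var F (S (S j)) end)) = scons e rho)
      by (apply functional_extensionality; intros [|n]; reflexivity).
    rewrite E; tauto. }
  split; intros [d [H1 H2]]; exists d; split; auto; intros e He.
  - apply H2. apply (proj2 (E e d)). exact He.
  - apply H2. apply (proj1 (E e d)). exact He.
Qed.

Lemma rep_sentence_sat {F P} (M : structure F P) A {k} (x : Fin.t k -> nat) y rho :
  RepSem M A x y -> sat M rho (rep_sentence A x y).
Proof.
  intros H. unfold rep_sentence. simpl. split.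
  - apply sat_ExU. exists (nm M y). split.
    + apply sat_inst. simpl. apply H. reflexivity.
    + intros e He. apply sat_inst in He. apply H. exact He.
  - apply sat_inst. rewrite teval_num. apply H. reflexivity.
Qed.

Lemma rep_sentence_RepSem {F P} (M : structure F P) A {k} (x : Fin.t k -> nat) y rho :
  sat M rho (rep_sentence A x y) -> RepSem M A x y.
Proof.
  unfold rep_sentence. simpl. intros [H1 H2].
  apply sat_ExU in H1. destruct H1 as [d [Hd Hu]].
  apply sat_inst in H2. rewrite teval_num in H2.
  intros e. split.
  - intros He. assert (e = d) by (apply Hu; apply sat_inst; exact He).
    assert (nm M y = d) by (apply Hu; apply sat_inst; exact H2). congruence.
  - intros ->; exact H2.
Qed.

Lemma rep_sentence_bound {F P} (A : form F P) {k} (x : Fin.t k -> nat) y :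
  fbound (S k) A -> sentence (rep_sentence A x y).
Proof.
  intros H. unfold sentence, rep_sentence, ExU. simpl.
  assert (HI : forall t, tbound 1 t -> fbound 1 (fsubst (inst x t) A)).
  { intros t Ht. eapply fsubst_bound; [exact H|]. intros [|n] Hn; simpl; auto. apply tbound_num. }
  repeat split.
  - apply HI. simpl; lia.
  - eapply fsubst_bound; [apply HI; simpl; lia|]. intros [|n] Hn; simpl; lia.
  - simpl; lia.
  - simpl; lia.
  - eapply fsubst_bound; [exact H|]. intros [|n] Hn; simpl; apply tbound_num.
Qed.

Fixpoint f2n {n} (i : Fin.t n) : nat :=
  match i with Fin.F1 => 0 | Fin.FS j => S (f2n j) end.

Lemma f2n_lt {n} (i : Fin.t n) : f2n i < n.
Proof. induction i; simpl; lia. Qed.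

Lemma vnth_S {k} (x : Fin.t (S k) -> nat) l : vnth x (S l) = vnth (fun i => x (Fin.FS i)) l.
Proof. unfold vnth; simpl. destruct (Fin.of_nat l k); reflexivity. Qed.

Lemma vnth_0 {k} (x : Fin.t (S k) -> nat) : vnth x 0 = x Fin.F1.
Proof. reflexivity. Qed.

Lemma vnth_f2n {k} (i : Fin.t k) : forall (x : Fin.t k -> nat), vnth x (f2n i) = x i.
Proof. induction i; intros x; simpl; [reflexivity|]. rewrite vnth_S. apply IHi. Qed.

Lemma vnth_ge {k} : forall (x : Fin.t k -> nat) l, k <= l -> vnth x l = 0.
Proof.
  induction k; intros x l H; [destruct l; reflexivity|].
  destruct l; [lia|]. rewrite vnth_S. apply IHk. lia.
Qed.

Lemma f2n_surj {k} : forall l, l < k -> exists i : Fin.t k, f2n i = l.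
Proof.
  induction k; intros l H; [lia|]. destruct l.
  - exists Fin.F1; reflexivity.
  - destruct (IHk l ltac:(lia)) as [i Hi]. exists (Fin.FS i); simpl; congruence.
Qed.

Lemma xenv_vcons {F P} (M : structure F P) {k} (a : nat) (x : Fin.t k -> nat) :
  xenv M (vcons a x) = scons (nm M a) (xenv M x).
Proof.
  apply functional_extensionality; intros [|l]; unfold xenv; simpl; [reflexivity|].
  rewrite vnth_S. reflexivity.
Qed.

Lemma vcons_eta {k} (v : Fin.t (S k) -> nat) : vcons (v Fin.F1) (vtail v) = v.
Proof.
  apply functional_extensionality; intros i.
  pattern i; apply Fin.caseS'; reflexivity.
Qed.

Record QM {F P} (M : structure F P) : Prop := {
  q1 : forall a, i_succ M a <> i_zero M;
  q2 : forall a b, i_succ M a = i_succ M b -> a = b;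
  q3 : forall a, a = i_zero M \/ exists b, i_succ M b = a;
  q4 : forall a, i_plus M a (i_zero M) = a;
  q5 : forall a b, i_plus M a (i_succ M b) = i_succ M (i_plus M a b);
  q6 : forall a, i_times M a (i_zero M) = i_zero M;
  q7 : forall a b, i_times M a (i_succ M b) = i_plus M a (i_times M a b) }.

Arguments q1 {F P M}. Arguments q2 {F P M}. Arguments q3 {F P M}. Arguments q4 {F P M}.
Arguments q5 {F P M}. Arguments q6 {F P M}. Arguments q7 {F P M}.

Lemma model_QM {F P} (T : form F P -> Prop) (M : structure F P) :
  extension_of_Q T -> (forall B rho, T B -> sat M rho B) -> QM M.
Proof.
  intros [_ HQ] HM.
  assert (G : forall A, Qax A -> sat M (fun _ => i_zero M) A) by (intros; apply HM, HQ; auto).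
  constructor.
  - intros a. exact (G _ (or_introl eq_refl) a).
  - intros a b. exact (G _ (or_intror (or_introl eq_refl)) a b).
  - intros a. exact (G _ (or_intror (or_intror (or_introl eq_refl))) a).
  - intros a. exact (G _ (or_intror (or_intror (or_intror (or_introl eq_refl)))) a).
  - intros a b. exact (G _ (or_intror (or_intror (or_intror (or_intror (or_introl eq_refl))))) a b).
  - intros a. exact (G _ (or_intror (or_intror (or_intror (or_intror (or_intror (or_introl eq_refl)))))) a).
  - intros a b. exact (G _ (or_intror (or_intror (or_intror (or_intror (or_intror (or_intror eq_refl)))))) a b).
Qed.

Section QFacts.
Context {F P : nat -> Type} (M : structure F P) (HQ : QM M).
Notation nm := (nm M).
Notation sc := (i_succ M).
Notation pl := (i_plus M).
Notation tm := (i_times M).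

Lemma nm_add a b : pl (nm a) (nm b) = nm (a + b).
Proof.
  induction b; simpl. rewrite (q4 HQ); f_equal; lia.
  rewrite (q5 HQ), IHb. rewrite Nat.add_succ_r. reflexivity.
Qed.

Lemma nm_mul a b : tm (nm a) (nm b) = nm (a * b).
Proof.
  induction b; simpl. rewrite (q6 HQ); rewrite Nat.mul_0_r; reflexivity.
  rewrite (q7 HQ), IHb, nm_add. f_equal. lia.
Qed.

Lemma nm_inj a : forall b, nm a = nm b -> a = b.
Proof.
  induction a; intros [|b] H; simpl in H; auto.
  - exfalso; apply (q1 HQ (nm b)); auto.
  - exfalso; apply (q1 HQ (nm a)); auto.
  - f_equal; apply IHa; apply (q2 HQ); auto.
Qed.

Lemma sum_std n : forall a b, pl a b = nm n -> exists a' b', a = nm a' /\ b = nm b' /\ a' + b' = n.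
Proof.
  induction n; intros a b H; destruct (q3 HQ b) as [->|[b' <-]].
  - rewrite q4 in H by auto. exists 0, 0; simpl; auto.
  - rewrite q5 in H by auto. exfalso; apply (q1 HQ _ H).
  - rewrite q4 in H by auto. exists (S n), 0; simpl; auto.
  - rewrite q5 in H by auto. apply (q2 HQ) in H.
    destruct (IHn _ _ H) as [a' [b'' [-> [-> E]]]]. exists a', (S b''); simpl; repeat split; auto; lia.
Qed.

Lemma lt_std z d n : pl (sc z) d = nm n -> exists i, i < n /\ d = nm i.
Proof.
  intros H. destruct (sum_std _ _ _ H) as [a' [b' [Ha [Hb E]]]].
  destruct a'. simpl in Ha. exfalso; apply (q1 HQ _ Ha).
  exists b'; split; auto; lia.
Qed.

Lemma lt_intro i n : i < n -> exists z, pl (sc z) (nm i) = nm n.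
Proof.
  intros H. exists (nm (n - S i)). change (sc (nm (n - S i))) with (nm (S (n - S i))).
  rewrite nm_add. f_equal; lia.
Qed.

Lemma plus_succ_l a n : pl (sc a) (nm n) = sc (pl a (nm n)).
Proof.
  induction n; simpl. rewrite !(q4 HQ); reflexivity.
  rewrite !(q5 HQ). rewrite IHn; reflexivity.
Qed.

Lemma trich y : forall d, (exists i, i <= y /\ d = nm i) \/ exists z, pl (sc z) (nm y) = d.
Proof.
  induction y; intros d.
  - destruct (q3 HQ d) as [->|[z <-]]. left; exists 0; auto.
    right; exists z; simpl; apply (q4 HQ).
  - destruct (IHy d) as [[i [Hi ->]]|[z Hz]].
    + left; exists i; split; auto.
    + destruct (q3 HQ z) as [->|[z' <-]].
      * left; exists (S y); split; auto. rewrite <- Hz.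
        change (sc (i_zero M)) with (nm 1). rewrite nm_add. reflexivity.
      * right; exists z'. simpl. rewrite (q5 HQ). rewrite <- Hz.
        rewrite (plus_succ_l (sc z')). reflexivity.
Qed.

Lemma mul_std q mm C : tm q (nm (S mm)) = nm C -> exists q', q = nm q'.
Proof.
  simpl. rewrite (q7 HQ). intros H. destruct (sum_std _ _ _ H) as [a' [b' [-> _]]]. eauto.
Qed.

Definition betaM (v i d c : dom M) : Prop :=
  (exists q, pl (tm q (sc (tm d (sc i)))) v = c) /\ (exists r, pl (sc r) v = sc (tm d (sc i))).

Lemma betaM_std c d i w : betaM w (nm i) (nm d) (nm c) <-> w = nm (c mod S (d * S i)).
Proof.
  unfold betaM.
  assert (Em : sc (tm (nm d) (sc (nm i))) = nm (S (d * S i))).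
  { change (sc (nm i)) with (nm (S i)). rewrite nm_mul. reflexivity. }
  rewrite Em. set (mm := d * S i).
  split.
  - intros [[q Hq] [r Hr]].
    destruct (lt_std _ _ _ Hr) as [v' [Hv' ->]].
    destruct (sum_std _ _ _ Hq) as [a' [b' [Ha [Hb E]]]].
    apply nm_inj in Hb; subst b'. destruct (mul_std _ _ _ Ha) as [q' ->].
    rewrite nm_mul in Ha. apply nm_inj in Ha. subst a'.
    f_equal. apply (Nat.mod_unique c (S mm) q'); [lia|]. lia.
  - intros ->. split.
    + exists (nm (c / S mm)). rewrite nm_mul, nm_add. f_equal.
      pose proof (Nat.div_mod_eq c (S mm)). lia.
    + exists (nm (S mm - S (c mod S mm))). change (sc (nm (S mm - S (c mod S mm)))) with (nm (S (S mm - S (c mod S mm)))).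
      rewrite nm_add. f_equal. pose proof (Nat.mod_upper_bound c (S mm) ltac:(lia)). lia.
Qed.

End QFacts.

Definition LtT {F P} : form F P := Ex (EQ (tplus (tsucc (V 0)) (V 1)) (V 2)).
Definition betaT {F P} : form F P :=
  And (Ex (EQ (tplus (ttimes (V 0) (tsucc (ttimes (V 3) (tsucc (V 2))))) (V 1)) (V 4)))
      (Ex (EQ (tplus (tsucc (V 0)) (V 1)) (tsucc (ttimes (V 3) (tsucc (V 2)))))).
Definition betaF {F P} (v i d c : term F) : form F P :=
  fsubst (fun n => match n with 0 => v | 1 => i | 2 => d | 3 => c | _ => Z0 end) betaT.

Fixpoint ExN {F P} (j : nat) (B : form F P) : form F P :=
  match j with 0 => B | S j' => Ex (ExN j' B) end.
Fixpoint bigand {F P} (j : nat) : (Fin.t j -> form F P) -> form F P :=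
  match j with
  | 0 => fun _ => Neg (Fal _ _)
  | S j' => fun f => And (f Fin.F1) (bigand j' (fun i => f (Fin.FS i)))
  end.

Definition compF {F P} (j : nat) (As : Fin.t j -> form F P) (Ah : form F P) : form F P :=
  ExN j (And (bigand j (fun i => fsubst (fun n => match n with 0 => V (f2n i) | S l => V (j + S l) end) (As i)))
             (fsubst (fun n => match n with 0 => V j | S l => if l <? j then V l else Z0 end) Ah)).

Definition muF {F P} (Ah : form F P) : form F P :=
  And (fsubst (fun n => match n with 0 => Z0 | 1 => V 0 | S (S l) => V (S l) end) Ah)
      (All (Imp LtT (Ex (fsubst (fun n => match n with 0 => tsucc (V 0) | 1 => V 1 | S (S l) => V (S (S (S l))) end) Ah)))).

Definition recF {F P} (Ab As : form F P) : form F P :=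
  Ex (Ex (And (All (Imp (Ex (EQ (tplus (tsucc (V 0)) (V 1)) (tsucc (V 5)))) (Ex (betaF (V 0) (V 1) (V 2) (V 3)))))
         (And (All (Imp (betaF (V 0) Z0 (V 1) (V 2)) (fsubst (fun n => match n with 0 => V 0 | S l => V (5 + l) end) Ab)))
         (And (All (Imp (Ex (EQ (tplus (tsucc (V 0)) (V 1)) (V 5)))
                (All (All (Imp (betaF (V 1) (V 2) (V 3) (V 4)) (Imp (betaF (V 0) (tsucc (V 2)) (V 3) (V 4))
                   (fsubst (fun n => match n with 0 => V 0 | 1 => V 2 | 2 => V 1 | S (S (S l)) => V (7 + l) end) As)))))))
              (betaF (V 2) (V 3) (V 0) (V 1)))))).

Fixpoint repF {F P} {m} (Ag : form F P) {k} (p : prog m k) : form F P :=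
  match p with
  | pZero _ _ => EQ (V 0) Z0
  | pSucc _ => EQ (V 0) (tsucc (V 1))
  | pProj _ i => EQ (V 0) (V (S (f2n i)))
  | pOracle _ => Ag
  | @pComp _ _ j h gs => compF j (fun i => repF Ag (gs i)) (repF Ag h)
  | pRec b s => recF (repF Ag b) (repF Ag s)
  | pMu h => muF (repF Ag h)
  end.

Lemma betaF_bound {F P} b (v i d c : term F) : tbound b v -> tbound b i -> tbound b d -> tbound b c ->
  fbound b (betaF (P:=P) v i d c).
Proof.
  intros. unfold betaF. eapply fsubst_bound with (b := 5).
  - simpl; repeat split; lia.
  - intros [|[|[|[|n]]]] Hn; simpl; auto.
Qed.

Lemma ExN_bound {F P} j : forall b (B : form F P), fbound (j + b) B -> fbound b (ExN j B).
Proof. induction j; intros b B H; simpl; auto. apply IHj. replace (j + S b) with (S j + b) by lia; auto. Qed.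

Lemma bigand_bound {F P} j : forall b (f : Fin.t j -> form F P), (forall i, fbound b (f i)) -> fbound b (bigand j f).
Proof. induction j; intros b f H; simpl; auto. Qed.

Lemma repF_bound {F P} {m} (Ag : form F P) : fbound (S m) Ag ->
  forall k (p : prog m k), fbound (S k) (repF Ag p).
Proof.
  intros HAg k p. induction p; simpl.
  - split; simpl; auto; lia.
  - split; simpl; lia.
  - split; simpl; pose proof (f2n_lt i); lia.
  - exact HAg.
  - unfold compF. apply ExN_bound. split.
    + apply bigand_bound. intros i. eapply fsubst_bound; [apply H|].
      intros [|l] Hl; simpl; pose proof (f2n_lt i); lia.
    + eapply fsubst_bound; [apply IHp|].
      intros [|l] Hl; simpl; [lia|]. destruct (Nat.ltb_spec l j); simpl; lia.
  - unfold recF. simpl. repeat split; try (simpl; lia);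
      try (apply betaF_bound; simpl; lia).
    + eapply fsubst_bound; [apply IHp1|]. intros [|l] Hl; simpl; lia.
    + eapply fsubst_bound; [apply IHp2|]. intros [|[|[|l]]] Hl; simpl; lia.
  - unfold muF. simpl. repeat split; try (simpl; lia).
    + eapply fsubst_bound; [apply IHp|]. intros [|[|l]] Hl; simpl; auto; lia.
    + eapply fsubst_bound; [apply IHp|]. intros [|[|l]] Hl; simpl; lia.
Qed.

Lemma sat_betaF {F P} (M : structure F P) rho v i d c :
  sat M rho (betaF v i d c) <-> betaM M (teval M rho v) (teval M rho i) (teval M rho d) (teval M rho c).
Proof. unfold betaF. rewrite sat_fsubst. simpl. unfold betaM. tauto. Qed.

Definition app {D : Type} (j : nat) (ds : nat -> D) (rho : nat -> D) : nat -> D :=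
  fun n => if n <? j then ds n else rho (n - j).

Lemma sat_ExN {F P} (M : structure F P) j : forall (B : form F P) rho,
  sat M rho (ExN j B) <-> exists ds, sat M (app j ds rho) B.
Proof.
  induction j; intros B rho; simpl.
  - assert (E : forall ds : nat -> dom M, app 0 ds rho = rho).
    { intros ds; apply functional_extensionality; intros n; unfold app; simpl; f_equal; lia. }
    split; [intros H; exists (fun _ => i_zero M); rewrite E; auto|intros [ds H]; rewrite E in H; auto].
  - split.
    + intros [d H]. apply IHj in H. destruct H as [ds H].
      exists (fun n => if n <? j then ds n else d).
      replace (app (S j) (fun n => if n <? j then ds n else d) rho) with (app j ds (scons d rho)); auto.
      apply functional_extensionality; intros n; unfold app.
      destruct (Nat.ltb_spec n j); destruct (Nat.ltb_spec n (S j)); try lia; auto.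
      * assert (n = j) by lia; subst. rewrite Nat.sub_diag; reflexivity.
      * replace (n - j) with (S (n - S j)) by lia. reflexivity.
    + intros [ds H]. exists (ds j). apply IHj. exists ds.
      replace (app j ds (scons (ds j) rho)) with (app (S j) ds rho); auto.
      apply functional_extensionality; intros n; unfold app.
      destruct (Nat.ltb_spec n j); destruct (Nat.ltb_spec n (S j)); try lia; auto.
      * assert (n = j) by lia; subst. rewrite Nat.sub_diag; reflexivity.
      * replace (n - j) with (S (n - S j)) by lia. reflexivity.
Qed.

Lemma sat_bigand {F P} (M : structure F P) j : forall (f : Fin.t j -> form F P) rho,
  sat M rho (bigand j f) <-> forall i, sat M rho (f i).
Proof.
  induction j; intros f rho; simpl.
  - split; [intros _ i; inversion i|intros _ H; exact H].
  - rewrite IHj. split.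
    + intros [H1 H2] i. pattern i; apply Fin.caseS'; auto.
    + intros H; split; auto.
Qed.

Section Main.
Context {F P : nat -> Type} (M : structure F P) (HQ : QM M).
Context {m : nat} (g : (Fin.t m -> nat) -> nat -> Prop) (Ag : form F P).
Hypothesis HAg : forall x y, g x y -> RepSem M Ag x y.

Lemma eval_inv k (p : prog m k) x y : eval g p x y ->
  match p in prog _ k0 return (Fin.t k0 -> nat) -> nat -> Prop with
  | pZero _ _ => fun _ y => y = 0
  | pSucc _ => fun x y => y = S (x Fin.F1)
  | pProj _ i => fun x y => y = x i
  | pOracle _ => fun x y => g x y
  | pComp h gs => fun x y => exists ys, (forall i, eval g (gs i) x (ys i)) /\ eval g h ys y
  | pRec b s => fun v y => (v Fin.F1 = 0 /\ eval g b (vtail v) y) \/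
       exists n z, v Fin.F1 = S n /\ eval g (pRec b s) (vcons n (vtail v)) z /\
                   eval g s (vcons n (vcons z (vtail v))) y
  | pMu h => fun x y => eval g h (vcons y x) 0 /\ forall i, i < y -> exists z, eval g h (vcons i x) (S z)
  end x y.
Proof. intros H; destruct H; simpl; eauto 10. Qed.


Lemma comp_case k j (As : Fin.t j -> form F P) (Ah : form F P) (x : Fin.t k -> nat) (ys : Fin.t j -> nat) z :
  (forall i, RepSem M (As i) x (ys i)) -> RepSem M Ah ys z -> RepSem M (compF j As Ah) x z.
Proof.
  intros Hs Hh d. unfold compF. rewrite sat_ExN. simpl.
  assert (Esig : forall (ds : nat -> dom M) (i : Fin.t j), (fun n => teval M (app j ds (scons d (xenv M x)))
      (match n with 0 => V (f2n i) | S l => V (j + S l) end)) = scons (ds (f2n i)) (xenv M x)).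
  { intros ds i. apply functional_extensionality; intros [|l]; simpl; unfold app.
    - pose proof (f2n_lt i). destruct (Nat.ltb_spec (f2n i) j); [reflexivity|lia].
    - destruct (Nat.ltb_spec (j + S l) j); [lia|]. replace (j + S l - j) with (S l) by lia. reflexivity. }
  assert (Etau : forall (ds : nat -> dom M), (fun n => teval M (app j ds (scons d (xenv M x)))
      (match n with 0 => V j | S l => if l <? j then V l else Z0 end)) =
      scons d (fun l => if l <? j then ds l else i_zero M)).
  { intros ds. apply functional_extensionality; intros [|l]; simpl; unfold app.
    - rewrite Nat.ltb_irrefl, Nat.sub_diag. reflexivity.
    - destruct (Nat.ltb_spec l j); simpl; [|reflexivity]. unfold app.
      destruct (Nat.ltb_spec l j); [reflexivity|lia]. }
  split.
  - intros [ds [H1 H2]]. rewrite sat_bigand in H1.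
    assert (Hds : forall i, ds (f2n i) = nm M (ys i)).
    { intros i. specialize (H1 i). rewrite sat_fsubst, Esig in H1. apply (Hs i). exact H1. }
    rewrite sat_fsubst, Etau in H2. apply Hh.
    replace (xenv M ys) with (fun l => if l <? j then ds l else i_zero M); auto.
    apply functional_extensionality; intros l. unfold xenv.
    destruct (Nat.ltb_spec l j).
    + destruct (f2n_surj l H) as [i <-]. rewrite Hds, vnth_f2n. reflexivity.
    + rewrite vnth_ge by lia. reflexivity.
  - intros ->. exists (fun l => nm M (vnth ys l)). split.
    + rewrite sat_bigand. intros i. rewrite sat_fsubst, Esig. rewrite vnth_f2n. apply Hs. reflexivity.
    + rewrite sat_fsubst, Etau. 
      replace (fun l => if l <? j then nm M (vnth ys l) else i_zero M) with (xenv M ys).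
      * apply Hh; reflexivity.
      * apply functional_extensionality; intros l. unfold xenv.
        destruct (Nat.ltb_spec l j); auto. rewrite vnth_ge by lia. reflexivity.
Qed.

Lemma mu_E1 k (x : Fin.t k -> nat) d : (fun n => teval M (scons d (xenv M x))
     (match n with 0 => Z0 | 1 => V 0 | S (S l) => V (S l) end)) = scons (i_zero M) (scons d (xenv M x)).
Proof. apply functional_extensionality; intros [|[|l]]; reflexivity. Qed.

Lemma mu_E2 k (x : Fin.t k -> nat) w i d : (fun n => teval M (scons w (scons i (scons d (xenv M x))))
     (match n with 0 => tsucc (V 0) | 1 => V 1 | S (S l) => V (S (S (S l))) end)) = scons (i_succ M w) (scons i (xenv M x)).
Proof. apply functional_extensionality; intros [|[|l]]; reflexivity. Qed.

Lemma mu_case k (Ah : form F P) (x : Fin.t k -> nat) y :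
  RepSem M Ah (vcons y x) 0 -> (forall i, i < y -> exists z, RepSem M Ah (vcons i x) (S z)) ->
  RepSem M (muF Ah) x y.
Proof.
  intros H0 Hlt d. unfold muF. simpl. rewrite sat_fsubst, mu_E1.
  setoid_rewrite sat_fsubst. setoid_rewrite mu_E2.
  split.
  - intros [H1 H2]. destruct (trich M HQ y d) as [[i [Hi ->]]|[z Hz]].
    + destruct (Nat.eq_dec i y) as [->|Hne]; auto. destruct (Hlt i ltac:(lia)) as [z Hz].
      rewrite <- (xenv_vcons M i x) in H1. apply Hz in H1.
      change (i_zero M) with (nm M 0) in H1. apply (nm_inj M HQ) in H1. discriminate.
    + exfalso. destruct (H2 (nm M y) (ex_intro _ z Hz)) as [w Hw].
      rewrite <- (xenv_vcons M y x) in Hw. apply H0 in Hw. exact (q1 HQ w Hw).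
  - intros ->. split.
    + rewrite <- (xenv_vcons M y x). apply H0. reflexivity.
    + intros i [z Hz]. destruct (lt_std M HQ _ _ _ Hz) as [i' [Hi' ->]].
      destruct (Hlt i' Hi') as [z' Hz']. exists (nm M z').
      rewrite <- (xenv_vcons M i' x). apply Hz'. reflexivity.
Qed.

Lemma rec_E2 (X : nat -> dom M) v a b c e : (fun n => teval M (scons v (scons a (scons b (scons c (scons e X)))))
     (match n with 0 => V 0 | S l => V (S (S (S (S (S l))))) end)) = scons v X.
Proof. apply functional_extensionality; intros [|l]; reflexivity. Qed.

Lemma rec_E3 (X : nat -> dom M) w v i a b c e : (fun n => teval M (scons w (scons v (scons i (scons a (scons b (scons c (scons e X)))))))
     (match n with 0 => V 0 | 1 => V 2 | 2 => V 1 | S (S (S l)) => V (S (S (S (S (S (S (S l))))))) end)) = scons w (scons i (scons v X)).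
Proof. apply functional_extensionality; intros [|[|[|l]]]; reflexivity. Qed.

Lemma rec_char (Ab As : form F P) d0 N X :
  sat M (scons d0 (scons N X)) (recF Ab As) <-> exists c d,
    (forall i, (exists z, i_plus M (i_succ M z) i = i_succ M N) -> exists v, betaM M v i d c) /\
    (forall v, betaM M v (i_zero M) d c -> sat M (scons v X) Ab) /\
    (forall i, (exists z, i_plus M (i_succ M z) i = N) -> forall v w, betaM M v i d c -> betaM M w (i_succ M i) d c ->
        sat M (scons w (scons i (scons v X))) As) /\
    betaM M d0 N d c.
Proof.
  unfold recF, betaM. simpl. setoid_rewrite sat_fsubst.
  setoid_rewrite rec_E2. setoid_rewrite rec_E3. simpl. tauto.
Qed.

Section Rec.
Context {k : nat} (b : prog m k) (s : prog m (S (S k))).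
Hypothesis IHb : forall x y, eval g b x y -> RepSem M (repF Ag b) x y.
Hypothesis IHs : forall x y, eval g s x y -> RepSem M (repF Ag s) x y.

Lemma rec_inv n x y : eval g (pRec b s) (vcons n x) y ->
  (n = 0 /\ eval g b x y) \/ exists n' z, n = S n' /\ eval g (pRec b s) (vcons n' x) z /\ eval g s (vcons n' (vcons z x)) y.
Proof. intros H; apply eval_inv in H; simpl in H; exact H. Qed.

Lemma rec_chain n : forall x y, eval g (pRec b s) (vcons n x) y -> exists val : nat -> nat,
  val n = y /\ eval g b x (val 0) /\ forall j, j < n -> eval g s (vcons j (vcons (val j) x)) (val (S j)).
Proof.
  induction n; intros x y H; apply rec_inv in H; destruct H as [[Hn H]|[n' [z [Hn [H1 H2]]]]]; try discriminate.
  - exists (fun _ => y). repeat split; auto. intros; lia.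
  - injection Hn as <-. destruct (IHn x z H1) as [val [Hv0 [Hv1 Hv2]]].
    exists (fun j => if j =? S n then y else val j). simpl. rewrite Nat.eqb_refl. repeat split; auto.
    intros j Hj. destruct (Nat.eqb_spec j (S n)); [lia|].
    simpl. destruct (Nat.eqb_spec j n) as [->|Hne].
    + rewrite Hv0. exact H2.
    + apply Hv2; lia.
Qed.

Lemma rec_case n x y : eval g (pRec b s) (vcons n x) y -> RepSem M (recF (repF Ag b) (repF Ag s)) (vcons n x) y.
Proof.
  intros H d0. rewrite xenv_vcons, rec_char. split.
  - intros [c [d [C1 [C2 [C3 C4]]]]].
    assert (CL : forall j, j <= n -> forall yj, eval g (pRec b s) (vcons j x) yj ->
               forall w, betaM M w (nm M j) d c -> w = nm M yj).
    { induction j; intros Hj yj Hev w Hw; apply rec_inv in Hev;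
        destruct Hev as [[Hn Hev]|[n' [z [Hn [H1 H2]]]]]; try discriminate.
      - apply C2 in Hw. apply (IHb x yj Hev). exact Hw.
      - injection Hn as <-.
        destruct (C1 (nm M j)) as [v Hv].
        { destruct (lt_intro M HQ j (S n) ltac:(lia)) as [z' Hz']. exists z'. exact Hz'. }
        assert (Ev : v = nm M z) by (apply (IHj ltac:(lia) z H1 v Hv)). subst v.
        assert (Hs := C3 (nm M j) ltac:(destruct (lt_intro M HQ j n ltac:(lia)) as [z' Hz']; exists z'; exact Hz')
                  (nm M z) w Hv Hw).
        rewrite <- (xenv_vcons M z x), <- (xenv_vcons M j (vcons z x)) in Hs.
        apply (IHs _ _ H2). exact Hs. }
    apply (CL n (le_n n) y H d0 C4).
  - intros ->. destruct (rec_chain n x y H) as [val [Hv0 [Hv1 Hv2]]].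
    destruct (beta_lemma n val) as [c [dd Hc]].
    exists (nm M c), (nm M dd). split; [|split; [|split]].
    + intros i [z Hz]. change (i_succ M (nm M n)) with (nm M (S n)) in Hz.
      destruct (lt_std M HQ _ _ _ Hz) as [i' [Hi' ->]].
      exists (nm M (c mod S (dd * S i'))). apply betaM_std; auto.
    + intros v Hv. change (i_zero M) with (nm M 0) in Hv. apply betaM_std in Hv; auto.
      rewrite Hc in Hv by lia. subst v. apply (IHb x (val 0) Hv1); reflexivity.
    + intros i [z Hz] v w Hv Hw.
      destruct (lt_std M HQ _ _ _ Hz) as [i' [Hi' ->]].
      change (i_succ M (nm M i')) with (nm M (S i')) in Hw.
      apply betaM_std in Hv; auto. apply betaM_std in Hw; auto.
      rewrite Hc in Hv, Hw by lia. subst v w.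
      rewrite <- (xenv_vcons M (val i') x), <- (xenv_vcons M i' (vcons (val i') x)).
      apply (IHs _ _ (Hv2 i' Hi')); reflexivity.
    + apply betaM_std; auto. rewrite Hc by lia. congruence.
Qed.
End Rec.

End Main.

Lemma main_rep {F P} (M : structure F P) (HQ : QM M) {m} (g : (Fin.t m -> nat) -> nat -> Prop) (Ag : form F P)
  (HAg : forall x y, g x y -> RepSem M Ag x y) :
  forall k (p : prog m k) x y, eval g p x y -> RepSem M (repF Ag p) x y.
Proof.
  intros k p. induction p; intros x y Hev0; pose proof (eval_inv g _ _ _ _ Hev0) as Hev; simpl in Hev.
  - subst. intros d; simpl. tauto.
  - subst. intros d; simpl. tauto.
  - subst. intros d; simpl. unfold xenv. rewrite vnth_f2n. tauto.
  - apply HAg; auto.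
  - destruct Hev as [ys [Hgs Hh]]. apply (comp_case M) with ys; auto.
  - rewrite <- (vcons_eta x) in Hev0 |- *. apply (rec_case M HQ g Ag).
    + intros; apply IHp1; auto.
    + intros; apply IHp2; auto.
    + exact Hev0.
  - destruct Hev as [H0 Hlt]. apply (mu_case M HQ).
    + apply IHp; auto.
    + intros i Hi. destruct (Hlt i Hi) as [z Hz]. exists z. apply IHp; auto.
Qed.

Theorem mainTheorem19 (F P : nat -> Type) (T : form F P -> Prop)
  (m : nat) (g : (Fin.t m -> nat) -> nat -> Prop) :
  extension_of_Q T -> partial_function g -> represents T g ->
  forall (k : nat) (f : (Fin.t k -> nat) -> nat -> Prop),
    partial_function f -> oracle_computable g f -> represents T f.
Proof.
  intros HT Hg [Ag [HAgb HAgrep]] k f Hf [p Hp].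
  exists (repF Ag p). split; [apply repF_bound; auto|].
  intros x y Hxy. destruct HT as [[HTs HTc] HTQ] eqn:EHT.
  apply HTc.
  - apply rep_sentence_bound. apply repF_bound; auto.
  - intros M HM rho.
    assert (HQ : QM M) by (apply (model_QM T M); auto).
    apply rep_sentence_sat. apply (main_rep M HQ g Ag).
    + intros x' y' Hxy'. apply (rep_sentence_RepSem M Ag x' y' rho). apply HM. auto.
    + apply Hp; auto.
Qed.
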